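(* Let $F$ and $H$ be fixed graphs and let $r\ge |V(F)|$. Then $\widehat{\mathrm{ex}}_r(n,H,\text{Berge-}F)\le O(\mathrm{ex}(n,H,F))+O(n^{|V(H)|-1})$ as $n\to\infty$.
   Context: A hypergraph $\mathcal{H}$ is a Berge copy of a graph $G$ if $V(G)\subseteq V(\mathcal{H})$ and there is a bijection $f:E(G)\to E(\mathcal{H})$ with $e\subseteq f(e)$ for all $e\in E(G)$; $\mathcal{H}$ is Berge-$F$-free if it contains no Berge copy of $F$ as a subhypergraph. The shadow graph of a hypergraph $\mathcal{H}$ is the graph on $V(\mathcal{H})$ in which $uv$ is an edge iff some hyperedge contains both $u$ and $v$. $\widehat{\mathrm{ex}}_r(n,H,\text{Berge-}F)$ is the maximum number of copies of $H$ in the shadow graph of an $r$-uniform Berge-$F$-free $n$-vertex hypergraph. $\mathrm{ex}(n,H,F)$ is the maximum number of copies of $H$ in an $F$-free $n$-vertex graph. *)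

(* Defs.v *)
From mathcomp Require Import all_boot.
Set Implicit Arguments. Unset Strict Implicit. Unset Printing Implicit Defensive.

Definition is_graph (T : finType) (E : {set {set T}}) : bool :=
  [forall e in E, #|e| == 2].

Definition is_uniform (T : finType) (r : nat) (E : {set {set T}}) : bool :=
  [forall e in E, #|e| == r].

Definition shadow (T : finType) (E : {set {set T}}) : {set {set T}} :=
  [set e : {set T} | (#|e| == 2) && [exists h in E, e \subset h]].

(* The (unlabelled) copies of H = (VH, EH) in the graph G: subgraphs (V', E')
   of G that are isomorphic to H, i.e. images of H under an injection. *)
Definition copy_set (VH T : finType) (EH : {set {set VH}}) (G : {set {set T}})
  : {set ({set T} * {set {set T}})} :=
  [set p : {set T} * {set {set T}} | [exists f : {ffun VH -> T},
     [&& injectiveb f, p.1 == f @: VH, p.2 == [set (f @: e) | e : {set VH} in EH]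
       & p.2 \subset G]]].

Definition copies (VH T : finType) (EH : {set {set VH}}) (G : {set {set T}}) : nat :=
  #|copy_set EH G|.

Definition contains (VF T : finType) (EF : {set {set VF}}) (G : {set {set T}}) : bool :=
  [exists f : {ffun VF -> T}, injectiveb f && [forall e in EF, (f @: e) \in G]].

Definition berge_contains (VF T : finType) (EF : {set {set VF}}) (E : {set {set T}}) : bool :=
  [exists f : {ffun VF -> T}, exists g : {ffun {set VF} -> {set T}},
    [&& injectiveb f,
        [forall e in EF, (g e \in E) && (f @: e \subset g e)]
      & [forall e1 in EF, forall e2 in EF, (g e1 == g e2) ==> (e1 == e2)]]].

Definition ex_gen (VH VF : finType) (EH : {set {set VH}}) (EF : {set {set VF}}) (n : nat) : nat :=
  \max_(G : {set {set 'I_n}} | is_graph G && ~~ contains EF G) copies EH G.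

Definition ex_hat (VH VF : finType) (r : nat) (EH : {set {set VH}}) (EF : {set {set VF}})
    (n : nat) : nat :=
  \max_(E : {set {set 'I_n}} | is_uniform r E && ~~ berge_contains EF E)
     copies EH (shadow E).

(* Main.v *)
Require Import Defs.
From mathcomp Require Import all_boot.
From mathcomp Require Import ring.
Set Implicit Arguments. Unset Strict Implicit. Unset Printing Implicit Defensive.


Lemma card_nat (T : finType) (A : {set T}) : #|A| = \sum_(x : T) (x \in A : nat).
Proof. by rewrite -sum1_card big_mkcond /=; apply: eq_bigr => x _; case: (x \in A). Qed.

Lemma card_exists_le (I J : finType) (P : pred I) (Q : I -> J -> bool) :
  #|[set j | [exists i in P, Q i j]]| <= \sum_(i in P) #|[set j | Q i j]|.
Proof.
rewrite card_nat.
rewrite (eq_bigr (fun i => \sum_j (j \in [set j | Q i j] : nat))); last by move=> i _; rewrite card_nat.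
rewrite exchange_big /=; apply: leq_sum => j _.
rewrite inE; case: existsP => [[i /andP [Pi Qij]]|]; last by [].
by rewrite (bigD1 i) //= inE Qij.
Qed.

Lemma card_family_prod (aT rT : finType) (F : aT -> {set rT}) :
  #|[set f : {ffun aT -> rT} | f \in family F]| = \prod_x #|F x|.
Proof. by rewrite cardsE card_family foldrE big_map big_enum. Qed.

Lemma sdr (I : eqType) (T : finType) (t0 : T) (A : I -> {set T}) (s : seq I) :
  uniq s -> (forall i, i \in s -> size s <= #|A i|) ->
  exists g : I -> T, (forall i, i \in s -> g i \in A i) /\ {in s &, injective g}.
Proof.
elim: s => [|i s IH] /=.
  by move=> _ _; exists (fun _ => t0); split.
move=> /andP [nis us] HA.
have [g' [Hg' Ig']] := IH us (fun j hj => leq_trans (leqnSn _) (HA j (mem_behead (s:=i::s) hj))).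
have : ~~ (A i \subset [set x in map g' s]).
  apply/negP => /subset_leq_card.
  have := HA i (mem_head _ _).
  move=> H1 H2.
  have := leq_trans H1 H2.
  rewrite cardsE.
  have := card_size (map g' s); rewrite size_map => H3 H4.
  by have := leq_trans H4 H3; rewrite ltnn.
case/subsetPn => t tA; rewrite inE => tn.
exists (fun j => if j == i then t else g' j); split.
  move=> j; rewrite inE; case: eqP => [->|_] //= js; exact: Hg'.
move=> j1 j2; rewrite !inE.
case: (eqVneq j1 i) => [->|n1]; case: (eqVneq j2 i) => [->|n2] //= H1 H2.
- by move=> E; move: tn; rewrite E map_f.
- by move=> E; move: tn; rewrite -E map_f.
- by apply: Ig'.
Qed.


Lemma light_pair (VF T : finType) (EF : {set {set VF}}) (r : nat) (E : {set {set T}}) :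
 is_graph EF -> #|VF| <= r -> is_uniform r E -> ~~ berge_contains EF E ->
 forall h, h \in E ->
 exists e : {set T}, [&& e \subset h, #|e| == 2 & #|[set h' in E | e \subset h']| < #|EF|].
Proof.
move=> /forallP gF Hr /forallP uE nB h hE.
case: (boolP [exists e : {set T}, [&& e \subset h, #|e| == 2 & #|[set h' in E | e \subset h']| < #|EF|]]).
  by move=> /existsP.
rewrite negb_exists => /forallP Hall.
have Hle : #|VF| <= #|h| by move: (uE h); rewrite hE => /eqP ->.
pose f := [ffun v => @enum_val T (mem h) (widen_ord Hle (enum_rank v))].
have fh : forall v, f v \in h by move=> v; rewrite ffunE; exact: enum_valP.
have finj : injective f.
  move=> v1 v2; rewrite !ffunE => /enum_val_inj /(congr1 (@nat_of_ord _)) /= /ord_inj.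
  exact: enum_rank_inj.
have Hsz : forall i, i \in enum EF -> size (enum EF) <= #|[set h' in E | f @: i \subset h']|.
  move=> i hi.
  rewrite -cardE.
  move: (Hall (f @: i)); rewrite mem_enum in hi.
  have -> : f @: i \subset h by apply/subsetP => x /imsetP [v _ ->].
  have -> : #|f @: i| == 2 by rewrite card_imset //; move: (gF i); rewrite hi.
  by rewrite /= -leqNgt.
have [g [Hg Ig]] := @sdr _ _ set0 (fun e : {set VF} => [set h' in E | f @: e \subset h']) (enum EF) (enum_uniq _) Hsz.
  case/negP: nB; apply/existsP; exists f; apply/existsP; exists [ffun e => g e].
apply/and3P; split.
- by apply/injectiveP.
- apply/forallP => e; apply/implyP => eF; rewrite ffunE.
  by have := Hg e; rewrite mem_enum inE => /(_ eF).
- apply/forallP => e1; apply/implyP => e1F; apply/forallP => e2; apply/implyP => e2F.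
  rewrite !ffunE; apply/implyP => /eqP ge; apply/eqP; apply: Ig => //; by rewrite mem_enum.
Qed.


Lemma pairs_card (T : finType) : #|[set e : {set T} | #|e| == 2]| <= #|T| * #|T|.
Proof.
rewrite -card_prod.
apply: leq_trans (leq_imset_card (fun x : T * T => [set x.1; x.2]) predT).
apply: subset_leq_card; apply/subsetP => e; rewrite inE => /cards2P [x [y [_ ->]]].
by apply/imsetP; exists (x, y).
Qed.

Lemma edges_bound (VF T : finType) (EF : {set {set VF}}) (r : nat) (E : {set {set T}}) :
 is_graph EF -> #|VF| <= r -> is_uniform r E -> ~~ berge_contains EF E ->
 #|E| <= #|EF| * (#|T| * #|T|).
Proof.
move=> gF Hr uE nB.
pose P (h e : {set T}) := [&& e \subset h, #|e| == 2 & #|[set h' in E | e \subset h']| < #|EF|].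
pose phi h := odflt set0 [pick e | P h e].
have Hphi : forall h, h \in E -> P h (phi h).
  move=> h hE; rewrite /phi; case: pickP => [e //|none].
  have [e He] := light_pair gF Hr uE nB hE.
  by move: (none e); rewrite /P He.
rewrite -sum1_card (partition_big phi (fun e : {set T} => e \in [set e : {set T} | #|e| == 2])); last first.
  by move=> h hE; rewrite inE; case/and3P: (Hphi h hE).
apply: (@leq_trans (\sum_(e in [set e : {set T} | #|e| == 2]) #|EF|)).
  apply: leq_sum => e _.
  rewrite sum1dep_card.
  case: (set0Pn [set x in E | phi x == e]) => [[h0]|H0]; last first.
    have /eqP -> : [set x in E | phi x == e] == set0 by apply/negPn/set0Pn.
    by rewrite cards0.
  rewrite inE => /andP [h0E /eqP ph0].
  have := Hphi h0 h0E; rewrite ph0 => /and3P [_ _ lt].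
  apply: ltnW; apply: leq_ltn_trans lt; apply: subset_leq_card.
  apply/subsetP => x; rewrite !inE => /andP [xE /eqP px]; rewrite xE /=.
  by have := Hphi x xE; rewrite px => /and3P [].
rewrite sum_nat_const mulnC leq_mul2l pairs_card orbT //.
Qed.


Lemma count3 (VH T : finType) (x y z : VH) (h : {set T}) :
  x != y -> x != z -> y != z ->
  #|[set f : {ffun VH -> T} | [&& f x \in h, f y \in h & f z \in h]]| =
  #|h| ^ 3 * #|T| ^ (#|VH| - 3).
Proof.
move=> xy xz yz.
pose X := [set x; y; z].
have cX : #|X| = 3.
  by rewrite /X [[set x; y; z]]setUC cardsU1 cards2 !inE negb_or xy (eq_sym z) xz (eq_sym z) yz.
pose F := fun v => if v \in X then h else [set: T].
apply: (@eq_trans _ _ #|[set f : {ffun VH -> T} | f \in family F]|).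
  apply: eq_card => f. rewrite !inE; apply/and3P/familyP.
  - move=> [fx fy fz] v; rewrite /F; case: ifP => [|_]; last by rewrite inE.
    by rewrite /X !inE => /orP [/orP [] |] /eqP ->.
  - move=> H; have := H x; have := H y; have := H z.
    by rewrite /F /X !inE !eqxx !orbT.
rewrite card_family_prod (bigID (mem X)) /=.
rewrite (eq_bigr (fun _ => #|h|)); last by move=> v vX; rewrite /F vX.
rewrite [X in _ * X](eq_bigr (fun _ => #|T|)); last by move=> v vX; rewrite /F (negbTE vX) cardsT.
rewrite !prod_nat_const cX.
congr (_ * _ ^ _).
have := cardsC X; rewrite cX => <-; rewrite addKn.
by rewrite [RHS](eq_card (B := fun i => i \notin X)) // => v; rewrite inE.
Qed.


Definition cond (T : finType) (E : {set {set T}}) (c : {set T} * {set {set T}}) : bool :=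
  [exists h in E, exists e1 in c.2, exists e2 in c.2, (e1 != e2) && (e1 :|: e2 \subset h)].

Lemma pair_bound (VH T : finType) (r K : nat) (E : {set {set T}}) (e1 e2 : {set VH}) :
  is_uniform r E -> #|E| <= K * (#|T| * #|T|) -> #|e1| == 2 -> #|e2| == 2 -> e1 != e2 ->
  #|[set f : {ffun VH -> T} | [exists h in E, f @: e1 :|: f @: e2 \subset h]]|
    <= K * r ^ 3 * #|T| ^ (#|VH| - 1).
Proof.
move=> /forallP uE HE /cards2P [x [y [xy ->]]] c2 ne.
have [z ze2 zn] : exists2 z, z \in e2 & z \notin [set x; y].
  apply/subsetPn; apply: contra ne => sub.
  by rewrite eq_sym eqEcard sub (eqP c2) cards2 xy.
move: zn; rewrite !inE negb_or => /andP [zx zy].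
apply: (@leq_trans #|[set f : {ffun VH -> T} | [exists h in E, [&& f x \in h, f y \in h & f z \in h]]]|).
  apply: subset_leq_card; apply/subsetP => f; rewrite !inE => /existsP [h /andP [hE sub]].
  apply/existsP; exists h; rewrite hE /=.
  have hs : forall v, v \in [set x; y] :|: e2 -> f v \in h.
    move=> v; rewrite inE => /orP [vi|vi]; apply: (subsetP sub); rewrite inE.
      by rewrite (imset_f f vi).
    by rewrite (imset_f f vi) orbT.
  by rewrite !hs // !inE ?eqxx ?orbT ?ze2 // orbT.
apply: leq_trans (card_exists_le _ _) _.
rewrite (eq_bigr (fun _ => r ^ 3 * #|T| ^ (#|VH| - 3))); last first.
  have xz : x != z by rewrite eq_sym.
  have yz : y != z by rewrite eq_sym.
  move=> h hE; rewrite count3 //.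
  by move: (uE h); rewrite hE => /eqP ->.
rewrite sum_nat_const.
have p3 : 3 <= #|VH|.
  have <- : #|[set x; y; z]| = 3.
    by rewrite [[set x; y; z]]setUC cardsU1 cards2 !inE negb_or xy zx zy.
  exact: max_card.
have -> : #|VH| - 1 = 2 + (#|VH| - 3) by rewrite addnBA // add2n.
rewrite expnD.
apply: (leq_trans (leq_mul HE (leqnn _))).
apply/eq_leq; rewrite (expnS _ 1) expn1.
rewrite !mulnA; congr (_ * _); rewrite -!mulnA; congr (_ * _). ring.
Qed.


Lemma A_bound (VH T : finType) (EH : {set {set VH}}) (r K : nat) (E : {set {set T}}) :
 is_graph EH -> is_uniform r E -> #|E| <= K * (#|T| * #|T|) ->
 #|copy_set EH (shadow E) :&: [set c | cond E c]| <= #|EH| * #|EH| * (K * r ^ 3 * #|T| ^ (#|VH| - 1)).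
Proof.
move=> /forallP gH uE HE.
pose PR := [set pr : {set VH} * {set VH} | [&& pr.1 \in EH, pr.2 \in EH & pr.1 != pr.2]].
pose Phi := [set f : {ffun VH -> T} | [exists pr in PR, [exists h in E, f @: pr.1 :|: f @: pr.2 \subset h]]].
apply: (@leq_trans #|Phi|).
  have Hsub : copy_set EH (shadow E) :&: [set c | cond E c] \subset [set (f @: VH, [set f @: e | e : {set VH} in EH]) | f : {ffun VH -> T} in Phi].
  2: exact: (leq_trans (subset_leq_card Hsub) (leq_imset_card _ _)).
  apply/subsetP => -[c1 c2]; rewrite !inE => /andP [cc ccond].
  move: cc => /existsP [f /and4P [finj /eqP Hc1 /eqP Hc2 _]]; simpl in Hc1, Hc2.
  move: ccond => /existsP [h /andP [hE /existsP [e1' /andP [e1in /existsP [e2' /andP [e2in /andP [ne sub]]]]]]].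
  have e1in2 : e1' \in c2 := e1in. have e2in2 : e2' \in c2 := e2in.
  move: e1in2 e2in2 ne sub; rewrite Hc2 => /imsetP [a1 a1H ->] /imsetP [a2 a2H ->] ne sub.
  apply/imsetP; exists f; last by rewrite Hc1.
  rewrite inE; apply/existsP; exists (a1, a2); rewrite inE /= a1H a2H /=.
  apply/andP; split; first by apply: contra ne => /eqP ->.
  by apply/existsP; exists h; rewrite hE.
apply: leq_trans (card_exists_le _ _) _.
apply: (@leq_trans (\sum_(pr in PR) (K * r ^ 3 * #|T| ^ (#|VH| - 1)))).
  apply: leq_sum => -[e1 e2]; rewrite inE /= => /and3P [e1H e2H ne].
  apply: pair_bound => //.
  - by move: (gH e1); rewrite e1H.
  - by move: (gH e2); rewrite e2H.
rewrite sum_nat_const leq_mul2r; apply/orP; right.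
rewrite -cardsX; apply: subset_leq_card; apply/subsetP => -[e1 e2].
by rewrite !inE /= => /and3P [-> -> _].
Qed.


Lemma sum_card_in (I : finType) (B : {set I}) (P : pred I) :
  \sum_(c in B) (P c : nat) = #|[set c in B | P c]|.
Proof. by rewrite card_nat big_mkcond; apply: eq_bigr => c _; rewrite inE; case: (c \in B). Qed.

Lemma double_count (I J : finType) (B : {set I}) (A : {set J}) (P : I -> J -> bool) :
  \sum_(c in B) #|[set s in A | P c s]| = \sum_(s in A) #|[set c in B | P c s]|.
Proof.
rewrite (eq_bigr (fun c => \sum_(s in A) (P c s : nat))); last by move=> c _; rewrite sum_card_in.
rewrite exchange_big; apply: eq_bigr => s _; by rewrite sum_card_in.
Qed.

Section Avg.
Variables (VF VH T : finType) (EF : {set {set VF}}) (EH : {set {set VH}}) (r M : nat).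
Variable E : {set {set T}}.
Hypothesis uE : is_uniform r E.
Hypothesis nB : ~~ berge_contains EF E.
Hypothesis Hex : forall G : {set {set T}}, is_graph G -> ~~ contains EF G -> copies EH G <= M.

Definition Fh (h : {set T}) : {set {set T}} := if h \in E then powerset h else [set set0].
Definition Fam := [set s : {ffun {set T} -> {set T}} | s \in family Fh].
Definition Gs (s : {ffun {set T} -> {set T}}) : {set {set T}} :=
  [set s h | h in [set h in E | #|s h| == 2]].

Lemma Gs_graph s : is_graph (Gs s).
Proof.
apply/forallP => e; apply/implyP => /imsetP [h]; rewrite inE => /andP [_ H] ->; exact: H.
Qed.

Lemma Gs_free s : s \in Fam -> ~~ contains EF (Gs s).
Proof.
rewrite inE => /familyP sF.
apply/negP => /existsP [f /andP [/injectiveP finj /forallP Hf]].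
case/negP: nB.
pose g (e : {set VF}) := odflt set0 [pick h in [set h in E | #|s h| == 2] | s h == f @: e].
have gS : forall e, e \in EF -> (g e \in E) && (s (g e) == f @: e).
  move=> e eF; rewrite /g; case: pickP => [h /andP [] |none].
    by rewrite inE => /andP [-> _] ->.
  move: (Hf e); rewrite eF /= => /imsetP [h hin Heq].
  by move: (none h); rewrite hin Heq eqxx.
apply/existsP; exists f; apply/existsP; exists [ffun e => g e].
apply/and3P; split.
- exact/injectiveP.
- apply/forallP => e; apply/implyP => eF; rewrite ffunE.
  case/andP: (gS e eF) => gE /eqP <-; rewrite gE /=.
  by move: (sF (g e)); rewrite /Fh gE powersetE.
- apply/forallP => e1; apply/implyP => e1F; apply/forallP => e2; apply/implyP => e2F.
  rewrite !ffunE; apply/implyP => /eqP ge; apply/eqP.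
  case/andP: (gS e1 e1F) => _ /eqP H1; case/andP: (gS e2 e2F) => _ /eqP H2.
  apply: (imset_inj finj); by rewrite -H1 -H2 ge.
Qed.

Lemma Fam_gt0 : 0 < #|Fam|.
Proof.
apply/card_gt0P; exists [ffun => set0]; rewrite inE; apply/familyP => h; rewrite ffunE /Fh.
by case: ifP => _; rewrite ?inE ?sub0set.
Qed.

Lemma per_copy (c : {set T} * {set {set T}}) :
  c \in copy_set EH (shadow E) -> ~~ cond E c ->
  #|Fam| <= 2 ^ (r * #|EH|) * #|[set s in Fam | c.2 \subset Gs s]|.
Proof.
rewrite inE => /existsP [f /and4P [_ _ /eqP c2E c2S]] nc.
pose ge (e : {set T}) := odflt set0 [pick h in E | e \subset h].
have geS : forall e, e \in c.2 -> [&& ge e \in E, e \subset ge e & #|e| == 2].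
  move=> e ec; move: (subsetP c2S e ec); rewrite inE => /andP [e2 /existsP [h /andP [hE eh]]].
  rewrite e2 andbT /ge; case: pickP => [h' /andP [-> ->] //|none].
  by move: (none h); rewrite hE eh.
pose Fc h := [set t in Fh h | [forall e in c.2, (ge e == h) ==> (t == e)]].
pose IM := [set ge e | e in c.2].
have sub1 : [set s : {ffun {set T} -> {set T}} | s \in family Fc] \subset [set s in Fam | c.2 \subset Gs s].
  apply/subsetP => s; rewrite !inE => /familyP sF.
  apply/andP; split.
    by apply/familyP => h; move: (sF h); rewrite inE => /andP [].
  apply/subsetP => e ec; case/and3P: (geS e ec) => gE _ e2.
  move: (sF (ge e)); rewrite inE => /andP [_ /forallP /(_ e)]; rewrite ec eqxx /= => /eqP se.
  by apply/imsetP; exists (ge e); rewrite ?inE ?gE ?se.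
apply: (leq_trans _ (leq_mul (leqnn _) (subset_leq_card sub1))).
rewrite card_family_prod /Fam cardsE card_family foldrE big_map big_enum /=.
apply: (@leq_trans (\prod_h ((if h \in IM then 2 ^ r else 1) * #|Fc h|))).
  apply: leq_prod => h _.
  case: ifP => hIM.
    case/imsetP: hIM => e0 e0c ->.
    case/and3P: (geS e0 e0c) => gE sub _.
    rewrite /Fh gE card_powerset.
    move: (uE); move=> /forallP /(_ (ge e0)); rewrite gE => /eqP ->.
    rewrite -{1}(muln1 (2 ^ r)) leq_mul2l; apply/orP; right.
    apply/card_gt0P; exists e0; rewrite !inE /Fh gE powersetE sub /=.
    apply/forallP => e; apply/implyP => ec; apply/implyP => /eqP gee.
    apply/negPn/negP => ne; case/negP: nc.
    apply/existsP; exists (ge e0); rewrite gE /=.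
    apply/existsP; exists e0; rewrite e0c /=; apply/existsP; exists e; rewrite ec ne /=.
    case/and3P: (geS e ec) => _ sube _.
    by rewrite subUset sub -gee sube.
  rewrite mul1n; apply: subset_leq_card; apply/subsetP => t tF; rewrite inE tF /=.
  apply/forallP => e; apply/implyP => ec; apply/implyP => /eqP gee.
  by case/negP: hIM; apply/imsetP; exists e.
rewrite big_split /= leq_mul2r; apply/orP; right.
rewrite -big_mkcond prod_nat_const -expnM leq_pexp2l // leq_mul2l; apply/orP; right.
apply: (leq_trans (leq_imset_card _ _)); rewrite c2E; exact: leq_imset_card.
Qed.

Lemma B_bound : #|copy_set EH (shadow E) :\: [set c | cond E c]| <= 2 ^ (r * #|EH|) * M.
Proof.
set B := copy_set EH (shadow E) :\: [set c | cond E c].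
have step1 : #|B| * #|Fam| <= 2 ^ (r * #|EH|) * \sum_(c in B) #|[set s in Fam | c.2 \subset Gs s]|.
  rewrite -sum_nat_const big_distrr /=; apply: leq_sum => c.
  rewrite /B inE => /andP [nc cc]; apply: per_copy => //; by move: nc; rewrite inE.
have step2 : \sum_(c in B) #|[set s in Fam | c.2 \subset Gs s]| <= #|Fam| * M.
  rewrite double_count -sum_nat_const; apply: leq_sum => s sF.
  apply: leq_trans (Hex (Gs_graph s) (Gs_free sF)).
  apply: subset_leq_card; apply/subsetP => c; rewrite inE => /andP [cB sub].
  move: cB; rewrite /B inE => /andP [_]; rewrite inE => /existsP [f /and4P [fi c1 c2 _]].
  by rewrite inE; apply/existsP; exists f; rewrite fi c1 c2 sub.
have := leq_trans step1 (leq_mul (leqnn _) step2).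
by rewrite mulnA -(mulnC M) mulnA leq_pmul2r ?Fam_gt0 // mulnC.
Qed.

End Avg.


Theorem proposition7 (VF VH : finType) (EF : {set {set VF}}) (EH : {set {set VH}})
    (r : nat) :
  is_graph EF -> is_graph EH -> #|VF| <= r ->
  exists (C1 C2 N : nat), forall n : nat, N <= n ->
    ex_hat r EH EF n <= C1 * ex_gen EH EF n + C2 * n ^ (#|VH| - 1).
Proof.
move=> gF gH Hr.
exists (2 ^ (r * #|EH|)), (#|EH| * #|EH| * (#|EF| * r ^ 3)), 0 => n _.
apply/bigmax_leqP => E /andP [uE nB].
rewrite /copies -(cardsID [set c | cond E c] (copy_set EH (shadow E))) addnC.
apply: leq_add.
  apply: (B_bound uE nB) => G gG nG; rewrite /ex_gen.
  by apply: leq_bigmax_cond; rewrite gG.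
have HE := edges_bound gF Hr uE nB.
apply: leq_trans (A_bound gH uE HE) _.
by rewrite card_ord !mulnA.
Qed.
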